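(* Let $n\ge1$ and $\mathcal{K}=\{\texttt{a},\texttt{b}\}$. For the uniform prior $\pi$ on $\mathcal{K}^n$ and the single-target gain function $g_{\rm T}$, $$V_{\rm T}[\pi\triangleright\mathbf{S}]=\frac12+\frac{1}{2^n}\binom{n-1}{\lfloor\frac{n-1}{2}\rfloor}.$$
   Context: A dataset is $x=(x_0,\dots,x_{n-1})\in\mathcal{K}^n$; its histogram $h(x)$ is the map $\kappa\mapsto|\{i:x_i=\kappa\}|$; $\#z$ is the number of datasets with histogram $z$. Shuffle channel $\mathbf{S}:\mathcal{K}^n\to\mathcal{K}^n$: $\mathbf{S}_{x,y}=1/\#h(x)$ if $h(y)=h(x)$, else $0$. Uniform prior: $\pi_x=1/2^n$. Single-target gain function: $\mathcal{W}=\mathcal{K}$, $g_{\rm T}(w,x)=1$ if $x_0=w$, else $0$. Posterior vulnerability: $V_{\rm T}[\pi\triangleright\mathbf{C}]=\sum_{y}\max_{w\in\mathcal{W}}\sum_{x}\pi_x\mathbf{C}_{x,y}g_{\rm T}(w,x)$. *)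

(* Defs.v *)
From mathcomp Require Import all_boot all_order all_algebra.
Set Implicit Arguments. Unset Strict Implicit. Unset Printing Implicit Defensive.
Import Order.TTheory GRing.Theory Num.Theory.
Local Open Scope ring_scope.

(* Key set K = {a, b}, encoded as bool (a := true, b := false). *)
Definition K := bool.

Definition dataset (n : nat) := n.-tuple K.

Definition hist n (x : dataset n) : {ffun K -> nat} :=
  [ffun k => count_mem k x].

Definition nhist n (x : dataset n) : nat :=
  #|[set y : dataset n | hist y == hist x]|.

Definition shuffle (R : fieldType) n (x y : dataset n) : R :=
  if hist y == hist x then (nhist x)%:R^-1 else 0.

Definition unif_prior (R : fieldType) n (x : dataset n) : R := (2 ^ n)%:R^-1.

(* Target entry x_0 (for n >= 1 this is the first entry of x; the default
   [true] of [head] is never used under the hypothesis 0 < n). *)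
Definition x0 n (x : dataset n) : K := head true (val x).

Definition gT (R : fieldType) n (w : K) (x : dataset n) : R :=
  if x0 x == w then 1 else 0.

(* Posterior vulnerability
   V[pi |> C] = sum_y max_w sum_x pi_x C_{x,y} g(w,x).
   The max over the finite nonempty W is taken with neutral 0, which is
   harmless since all summands are nonnegative. *)
Definition postV (R : realFieldType) n (pi : dataset n -> R)
  (C : dataset n -> dataset n -> R) (g : K -> dataset n -> R) : R :=
  \sum_(y : dataset n) \big[Num.max/0]_(w : K) \sum_(x : dataset n) pi x * C x y * g w x.

(* Main.v *)
Require Import Defs.
From mathcomp Require Import all_boot all_order all_algebra.
From mathcomp Require Import zify ring.
Import Order.TTheory GRing.Theory Num.Theory.
Local Open Scope ring_scope.

Lemma big_tupleS (R : Type) (idx : R) (op : Monoid.com_law idx) m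
  (F : m.+1.-tuple bool -> R) :
  \big[op/idx]_(t : m.+1.-tuple bool) F t =
  op (\big[op/idx]_(t : m.-tuple bool) F (cons_tuple true t))
     (\big[op/idx]_(t : m.-tuple bool) F (cons_tuple false t)).
Proof.
rewrite (reindex (fun p : bool * m.-tuple bool => cons_tuple p.1 p.2)) /=.
  by rewrite -(pair_big xpredT xpredT (fun b t => F (cons_tuple b t))) /= big_bool.
exists (fun t => (thead t, [tuple of behead t])) => [[b t] _ | t _] /=.
  by congr pair; apply: val_inj.
by apply: val_inj; rewrite /= [in RHS](tuple_eta t).
Qed.

Lemma count_tuples m j :
  (\sum_(t : m.-tuple bool) (count_mem true t == j) = 'C(m, j))%N.
Proof.
elim: m j => [|m IH] j.
  rewrite (eq_bigr (fun _ => (0 == j)%N : nat)) => [| t _]; last by rewrite tuple0.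
  by rewrite sum_nat_const card_tuple /=; case: j.
rewrite big_tupleS /=.
case: j => [|j].
  rewrite big1 ?add0n => [|t _] //.
  by rewrite bin0 -(bin0 m) -(IH 0%N); apply: eq_bigr => t _; rewrite add0n.
rewrite binS -(IH j) -(IH j.+1) addnC.
by congr (_ + _)%N; apply: eq_bigr => t _; rewrite ?add1n ?add0n.
Qed.

Lemma count_false (s : seq bool) : (count_mem false s = size s - count_mem true s)%N.
Proof.
elim: s => //= b s IH; have := count_size (pred1 true) s; case: b => /=; lia.
Qed.

Lemma hist_eq n (x y : dataset n) :
  (hist y == hist x) = (count_mem true y == count_mem true x).
Proof.
apply/eqP/eqP => [h | h].
  by have := congr1 (fun f : {ffun K -> nat} => f true) h; rewrite !ffunE.
apply/ffunP => -[]; rewrite !ffunE //.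
by rewrite !count_false !size_tuple h.
Qed.

Lemma nhist_eq n (x : dataset n) : nhist x = 'C(n, count_mem true x).
Proof.
rewrite /nhist -count_tuples -sum1_card big_mkcond /=.
by apply: eq_bigr => y _; rewrite inE hist_eq; case: eqP.
Qed.

Lemma maxbool (R : realFieldType) (F : bool -> R) :
  \big[Num.max/0]_(w : K) F w = Num.max (F true) (Num.max (F false) 0).
Proof. by rewrite /index_enum !unlock /=. Qed.

Lemma shuffle_eq (R : realFieldType) n (x y : dataset n) :
  shuffle R x y =
  (count_mem true y == count_mem true x)%:R * ('C(n, count_mem true y))%:R^-1.
Proof.
by rewrite /shuffle hist_eq nhist_eq; case: eqP => [->|_]; rewrite ?mul1r ?mul0r.
Qed.

Lemma inner_eq (R : realFieldType) m w (y : dataset m.+1) :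
  \sum_x unif_prior R x * shuffle R x y * gT R w x =
  (2 ^ m.+1)%:R^-1 * ('C(m.+1, count_mem true y))%:R^-1 *
  (if w then (if count_mem true y is k.+1 then 'C(m, k) else 0%N)
   else 'C(m, count_mem true y))%:R.
Proof.
under eq_bigr => x _ do rewrite shuffle_eq /unif_prior /gT.
rewrite big_tupleS /x0 /=.
set a := (2 ^ m.+1)%:R^-1; set d := ('C(m.+1, _))%:R^-1; set k := count_mem true y.
have E (b : bool) : \sum_(t : m.-tuple bool) a * ((k == (b + count_mem true t)%N)%:R * d) *
     (if b == w then 1 else 0) =
   a * d * (b == w)%:R * (\sum_(t : m.-tuple bool) (k == (b + count_mem true t)%N) : nat)%:R.
  rewrite natr_sum big_distrr; apply: eq_bigr => t _.
  by case: (b == w); case: (k == _); rewrite /= ?mulr1 ?mulr0 ?mul0r ?mul1r ?mulr0.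
rewrite (E true) (E false).
have -> : (\sum_(t : m.-tuple bool) (k == (0 + count_mem true t)%N) = 'C(m, k))%N.
  by rewrite -count_tuples; apply: eq_bigr => t _; rewrite add0n eq_sym.
have -> : (\sum_(t : m.-tuple bool) (k == (1 + count_mem true t)%N) =
   if k is j.+1 then 'C(m, j) else 0)%N.
  clear E; rewrite /k; case: (count_mem true y) => [|j]; first by rewrite big1.
  by rewrite -count_tuples; apply: eq_bigr => t _; rewrite add1n eqSS eq_sym.
by clear E; case: w => /=; rewrite ?mulr1 ?mulr0 ?mul0r ?add0r ?addr0.
Qed.

Lemma max_nat (R : realFieldType) (x : R) (p q : nat) : 0 <= x ->
  Num.max (x * p%:R) (Num.max (x * q%:R) 0) = x * (maxn p q)%:R.
Proof.
move=> x0.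
have -> : Num.max (x * q%:R) 0 = x * q%:R.
  by apply: max_l; rewrite mulr_ge0.
case: (leqP p q) => h.
  by apply: max_r; rewrite ler_wpM2l // ler_nat.
by apply: max_l; rewrite ler_wpM2l // ler_nat ltnW.
Qed.

Lemma sum_by_count (R : pzRingType) n (G : nat -> R) :
  \sum_(y : n.-tuple bool) G (count_mem true y) =
  \sum_(k < n.+1) ('C(n, k))%:R * G k.
Proof.
transitivity (\sum_(y : n.-tuple bool) \sum_(k < n.+1)
   ((count_mem true y == k)%:R * G k)).
  apply: eq_bigr => y _.
  rewrite (eq_bigr (fun k : 'I_n.+1 => if (k : nat) == count_mem true y then G k else 0)); last first.
    by move=> k _; rewrite eq_sym; case: eqP; rewrite ?mul1r ?mul0r.
  rewrite -big_mkcond big_ord1_eq ltnS.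
  by have := count_size (pred1 true) y; rewrite size_tuple => ->.
rewrite exchange_big /=; apply: eq_bigr => k _.
by rewrite -count_tuples natr_sum big_distrl.
Qed.

Lemma maxC m i : maxn 'C(m, i) 'C(m, i.+1) =
  (if m <= i.*2 then 'C(m, i) else 'C(m, i.+1))%N.
Proof.
have E := mul_bin_left m i; case: ifP => h.
  apply/maxn_idPl; rewrite -(leq_pmul2l (ltn0Sn i)) E leq_mul //.
  by move: h; rewrite -addnn; lia.
apply/maxn_idPr; rewrite -(leq_pmul2l (ltn0Sn i)) E leq_mul //.
by move/negbT: h; rewrite -ltnNge -addnn; lia.
Qed.

Lemma up_lt m i : (i < uphalf m)%N = (i.*2 < m)%N.
Proof.
rewrite uphalf_half -addnn; have := odd_double_half m; rewrite -addnn.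
by case: (odd m) => /= H; apply/idP/idP; lia.
Qed.

Lemma sub_up m : (m - uphalf m = m./2)%N.
Proof.
rewrite uphalf_half; have := odd_double_half m; rewrite -addnn.
by case: (odd m) => /= H; lia.
Qed.

Lemma nat_identity m :
  (\sum_(k < m.+2) maxn (if (k : nat) is j.+1 then 'C(m, j) else 0) 'C(m, k) =
   2 ^ m + 'C(m, m./2))%N.
Proof.
rewrite big_ord_recl /= bin0.
rewrite (eq_bigr (fun i : 'I_m.+1 => if m <= (i : nat).*2 then 'C(m, i) else 'C(m, i.+1)))%N; last first.
  by move=> i _; rewrite /bump leq0n add1n add0n -maxC.
rewrite max0n.
rewrite -(big_mkord xpredT (fun i => if m <= i.*2 then 'C(m, i) else 'C(m, i.+1)))%N.
have ht : (uphalf m <= m.+1)%N by rewrite uphalf_half; have := odd_double_half m; rewrite -addnn; case: (odd m) => /= H; lia.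
rewrite (big_cat_nat (n := uphalf m)) //=.
rewrite (eq_big_nat _ _ (F2 := fun i => 'C(m, i.+1))); last first.
  by move=> i /andP[_ hi]; rewrite ifF //; apply/negbTE; rewrite -ltnNge -up_lt.
rewrite [X in (_ + (_ + X))%N](eq_big_nat _ _ (F2 := fun i => 'C(m, i))); last first.
  by move=> i /andP[hi _]; rewrite ifT //; move: hi; rewrite leqNgt up_lt -leqNgt.
rewrite addnA.
have -> : (1 + \sum_(0 <= i < uphalf m) 'C(m, i.+1) = \sum_(0 <= i < (uphalf m).+1) 'C(m, i))%N.
  by rewrite big_nat_recl // bin0.
rewrite big_nat_recr //= addnAC -big_cat_nat //=.
have hu : (uphalf m <= m)%N by rewrite uphalf_half; have := odd_double_half m; rewrite -addnn; case: (odd m) => /= H; lia.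
rewrite big_mkord -sub_up (bin_sub hu).
congr (_ + _)%N.
rewrite -{1}(addn1 1) expnDn; apply: eq_bigr => i _.
by rewrite !exp1n !muln1.
Qed.

Theorem mainTheorem10 (R : realFieldType) (n : nat) (hn : (0 < n)%N) :
  postV (@unif_prior R n) (@shuffle R n) (@gT R n) =
  2^-1 + ('C(n.-1, n.-1./2))%:R / (2 ^ n)%:R.
Proof.
case: n hn => // m _; rewrite /postV.
set G := fun k : nat => (2 ^ m.+1)%:R^-1 * ('C(m.+1, k))%:R^-1 *
  ((maxn (if k is j.+1 then 'C(m, j) else 0) 'C(m, k))%:R : R).
rewrite (eq_bigr (fun y : dataset m.+1 => G (count_mem true y))); last first.
  move=> y _; rewrite maxbool !inner_eq /= max_nat //.
  by rewrite mulr_ge0 // invr_ge0 ler0n.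
rewrite sum_by_count.
rewrite (eq_bigr (fun k : 'I_m.+2 => (2 ^ m.+1)%:R^-1 *
  ((maxn (if (k : nat) is j.+1 then 'C(m, j) else 0) 'C(m, k))%:R : R))); last first.
  move=> k _; rewrite /G mulrCA mulrA divfK //.
  by rewrite pnatr_eq0 -lt0n bin_gt0 -ltnS.
rewrite -big_distrr -natr_sum nat_identity /=.
rewrite natrD expnS natrM.
have h2 : (2 ^ m)%:R != 0 :> R by rewrite pnatr_eq0 expn_eq0.
by field.
Qed.
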